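(* Let $Y$ be a geodesic space, $D\subseteq Y$, $S$ a semigroup of nonexpansive maps $D\to D$ endowed with the Borel $\sigma$-algebra of the compact-open topology, $(X,\mu)$ a probability space, $T:X\to X$ an ergodic measure-preserving transformation, $w:X\to S$ measurable, and $a_n(x)=w(x)w(Tx)\cdots w(T^{n-1}x)$ ($a_0$ the identity). Fix $y\in D$ with $\int_X d(y,a_1(x)y)\,d\mu(x)<\infty$ and let $A=\lim_{n\to\infty}\frac1n\int_X d(y,a_n(x)y)\,d\mu(x)$. Write $D_n(x)=d(y,a_n(x)y)$ and $D_n(x,k)=d(y,a_{n-k}(T^kx)y)$ for $0\le k\le n$. Let $E$ be the set of $x\in X$ such that for every $\varepsilon>0$ there exist $M\in\mathbb{N}$ and infinitely many $n\in\mathbb{N}$ with $D_n(x)-D_n(x,k)\ge(A-\varepsilon)k$ for all integers $k\in[M,n]$. Let $x\in E$ with $\lim_{n\to\infty}D_n(x)/n=A>0$. Then for all sequences $(\alpha_i)\subseteq(0,1]$ and $(p_i)\subseteq\mathbb{N}$ there exist sequences $(K_i),(n_i)\subseteq\mathbb{N}$ such that for all $i\ge1$: (i) $p_i\le K_i$, $n_i\in(K_{i+1},n_{i+1})$, and $D_{n_{i+1}}(x)\ge\max\{D_{n_i}(x),An_i\}$; (ii) for all integers $k\in[K_i,n_i]$, $|D_k(x)-Ak|\le Ak/2^i$ and \[(1-\min\{1/2^i,\alpha_i\})D_k(x)+d(a_k(x)y,a_{n_i}(x)y)\le D_{n_i}(x).\]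
   Context: A geodesic space is a metric space in which any two points are joined by a distance-preserving path from a real interval. A map is nonexpansive if it is $1$-Lipschitz. *)

(* Defs.v *)
From HB Require Import structures.
From mathcomp Require Import all_boot all_order all_algebra.
From mathcomp Require Import all_classical all_reals all_analysis.
Set Implicit Arguments. Unset Strict Implicit. Unset Printing Implicit Defensive.
Import Order.TTheory GRing.Theory Num.Theory.
Local Open Scope classical_set_scope.
Local Open Scope ring_scope.

Definition geodesic_space (R : realType) (Y : metricType R) : Prop :=
  forall u v : Y, exists g : R -> Y,
    g 0 = u /\ g (mdist u v) = v /\
    forall s t, 0 <= s <= mdist u v -> 0 <= t <= mdist u v ->
      mdist (g s) (g t) = `|s - t|.

Definition nonexpansive (R : realType) (Y : metricType R) (D : set Y)
  (f : D -> D) : Prop :=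
  forall u v : D, mdist (set_val (f u)) (set_val (f v)) <= mdist (set_val u) (set_val v).

Definition semigroup_of_maps (T : Type) (S : set (T -> T)) : Prop :=
  forall f g, S f -> S g -> S (f \o g).

Definition borel_measurable_fun d (X : measurableType d) (V : topologicalType)
  (f : X -> V) : Prop :=
  forall B : set V, <<s open >> B -> measurable (f @^-1` B).

Definition measure_preserving d (X : measurableType d) (R : realType)
  (mu : {measure set X -> \bar R}) (T : X -> X) : Prop :=
  measurable_fun setT T /\
  forall A : set X, measurable A -> mu (T @^-1` A) = mu A.

Definition ergodic d (X : measurableType d) (R : realType)
  (mu : {measure set X -> \bar R}) (T : X -> X) : Prop :=
  measure_preserving mu T /\
  forall A : set X, measurable A -> T @^-1` A = A -> mu A = 0%E \/ mu A = 1%E.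

Fixpoint cocycle (X U : Type) (T : X -> X) (w : X -> U -> U) (n : nat) (x : X) : U -> U :=
  match n with
  | 0 => id
  | n'.+1 => w x \o cocycle T w n' (T x)
  end.

(* Main.v *)
Require Import Defs.
From HB Require Import structures.
From mathcomp Require Import all_boot all_order all_algebra.
From mathcomp Require Import all_classical all_reals all_analysis.
From mathcomp Require Import lra.
Import Order.TTheory GRing.Theory Num.Theory.
Import numFieldTopology.Exports numFieldNormedType.Exports.
Local Open Scope classical_set_scope.
Local Open Scope ring_scope.


Fixpoint seqrec (f : nat -> nat -> nat) (i : nat) : nat :=
  match i with 0 => 0%N | j.+1 => f j.+1 (seqrec f j) end.

Lemma cocycle_nonexp (R : realType) (Y : metricType R) (D : set Y) (X : Type)
  (T : X -> X) (w : X -> D -> D) :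
  (forall z (u v : D), mdist (set_val (w z u)) (set_val (w z v)) <= mdist (set_val u) (set_val v)) ->
  forall n z (u v : D),
  mdist (set_val (cocycle T w n z u)) (set_val (cocycle T w n z v)) <= mdist (set_val u) (set_val v).
Proof.
move=> hw; elim=> [|n IH] z u v /=; first exact: le_refl.
exact: le_trans (hw _ _ _) (IH _ _ _).
Qed.

Lemma cocycle_split (X U : Type) (T : X -> X) (w : X -> U -> U) :
  forall k n z u, (k <= n)%N ->
  cocycle T w n z u = cocycle T w k z (cocycle T w (n - k) (iter k T z) u).
Proof.
elim=> [|k IH] n z u hkn; first by rewrite subn0.
case: n hkn => [//|m] hkm /=.
by rewrite (IH m (T z) u hkm) subSS -iterSr.
Qed.
Theorem lemma3p1 (R : realType) (Y : metricType R) (D : set Y)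
  (S : set {compact-open, D -> D})
  (d : measure_display) (X : measurableType d) (mu : probability X R)
  (T : X -> X) (w : X -> {compact-open, D -> D}) (y : D) (A : R) (x : X) :
  geodesic_space Y ->
  semigroup_of_maps S ->
  (forall f, S f -> nonexpansive f) ->
  ergodic mu T ->
  (forall z, S (w z)) ->
  borel_measurable_fun w ->
  let Dn := fun (n : nat) (z : X) =>
    mdist (set_val y) (set_val (cocycle T w n z y)) in
  let Dnk := fun (n k : nat) (z : X) =>
    mdist (set_val y) (set_val (cocycle T w (n - k) (iter k T z) y)) in
  (\int[mu]_z (Dn 1 z)%:E < +oo)%E ->
  (fun n : nat => ((n%:R)^-1)%:E * \int[mu]_z (Dn n z)%:E)%E @ \oo --> A%:E ->
  (* x belongs to E *)
  (forall eps : R, 0 < eps -> exists M : nat, forall N : nat, exists2 n : nat,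
     (N <= n)%N &
     forall k : nat, (M <= k <= n)%N -> (A - eps) * k%:R <= Dn n x - Dnk n k x) ->
  (fun n : nat => Dn n x / n%:R) @ \oo --> A ->
  0 < A ->
  forall (alpha : nat -> R) (p : nat -> nat),
    (forall i, 0 < alpha i <= 1) ->
    exists K n : nat -> nat, forall i : nat, (1 <= i)%N ->
      [/\ (p i <= K i)%N, (K i.+1 < n i < n i.+1)%N,
          Num.max (Dn (n i) x) (A * (n i)%:R) <= Dn (n i.+1) x &
          forall k : nat, (K i <= k <= n i)%N ->
            `|Dn k x - A * k%:R| <= A * k%:R / 2 ^+ i /\
            (1 - Num.min (2 ^+ i)^-1 (alpha i)) * Dn k x
              + mdist (set_val (cocycle T w k x y)) (set_val (cocycle T w (n i) x y))
              <= Dn (n i) x].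
Proof.
move=> geo semi hne erg hS hmeas Dn Dnk hint hlim hE hx hA alpha p halpha.
have hw : forall z (u v : D), mdist (set_val (w z u)) (set_val (w z v)) <= mdist (set_val u) (set_val v).
  by move=> z u v; exact: hne _ (hS z) u v.
set c := fun i : nat => Num.min ((2:R) ^+ i)^-1 (alpha i).
have cpos i : 0 < c i.
  by rewrite /c lt_min invr_gt0 exprn_gt0 //=; case/andP: (halpha i).
have cle1 i : c i <= 1.
  by rewrite /c ge_min; apply/orP; right; case/andP: (halpha i).
have cle2 i : c i <= ((2:R) ^+ i)^-1 by rewrite /c ge_min lexx.
have hN : forall i, exists N : nat, forall k, (N <= k)%N -> `|A - Dn k x / k%:R| <= A * c i / 2.
  move=> i; have hp : 0 < A * c i / 2 by rewrite divr_gt0 // mulr_gt0.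
  case: (cvgr_dist_le _ _ hx _ hp).
  by move=> N _ HN; exists N => k hk; exact: HN.
have hgrow : forall m : R, exists N : nat, forall n, (N <= n)%N -> m <= Dn n x.
  move=> m; have hp : 0 < A / 2 by rewrite divr_gt0.
  case: (cvgr_dist_le _ _ hx _ hp) => N0 _ HN0.
  set x0 := `|m| * 2 / A.
  have x0ge : 0 <= x0 by rewrite /x0 divr_ge0 ?mulr_ge0 // ltW.
  exists (maxn N0 (Num.Def.archi_bound x0)) => n; rewrite geq_max => /andP[h1 h2].
  have hn : x0 < n%:R.
    by apply: (lt_le_trans (archi_boundP x0ge)); rewrite ler_nat.
  have npos : 0 < n%:R :> R by apply: le_lt_trans hn.
  have := HN0 n h1; rewrite /= ler_norml => /andP[h3 h4].
  have e : Dn n x = Dn n x / n%:R * n%:R by rewrite divfK // gt_eqF.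
  have ex0 : x0 * A = `|m| * 2 by rewrite /x0 divfK // gt_eqF.
  have hm : m <= `|m| := ler_norm m.
  rewrite e; set q := Dn n x / n%:R in h3 h4 *.
  nra.
have [Nf hNf] := choice hN.
have hM : forall i, exists M : nat, forall N : nat, exists2 n : nat, (N <= n)%N &
    forall k : nat, (M <= k <= n)%N -> (A - A * c i / 2) * k%:R <= Dn n x - Dnk n k x.
  by move=> i; apply: hE; rewrite divr_gt0 // mulr_gt0.
have [Mf hMf] := choice hM.
pose K i := maxn (p i) (maxn (Nf i).+1 (Mf i)).
pose Pn (im : nat * nat) (n : nat) := [/\ (im.2 < n)%N, (K im.1.+1 < n)%N,
   Num.max (Dn im.2 x) (A * im.2%:R) <= Dn n x &
   forall k, (Mf im.1 <= k <= n)%N -> (A - A * c im.1 / 2) * k%:R <= Dn n x - Dnk n k x].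
have hnext : forall im, exists n, Pn im n.
  case=> i m; have [N0 HN0] := hgrow (Num.max (Dn m x) (A * m%:R)).
  have [n hn1 hn2] := hMf i (maxn N0 (maxn m.+1 (K i.+1).+1)).
  move: hn1; rewrite !geq_max => /and3P[h1 h2 h3].
  by exists n; split => //; exact: HN0.
have [fn hfn] := choice hnext.
exists K, (seqrec (fun i m => fn (i, m))).
case=> [//|j] _.
have P1 := hfn (j.+1, seqrec (fun i m => fn (i, m)) j).
have P2 := hfn (j.+2, seqrec (fun i m => fn (i, m)) j.+1).
set i := j.+1 in P1 P2 *.
have ei : seqrec (fun i m => fn (i, m)) i = fn (i, seqrec (fun i m => fn (i, m)) j) by [].
have ei1 : seqrec (fun i m => fn (i, m)) i.+1 = fn (i.+1, seqrec (fun i m => fn (i, m)) i) by [].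
rewrite ei1 -ei1.
set ni := seqrec (fun i m => fn (i, m)) i in ei ei1 P2 *.
rewrite -ei in P1.
case: P1 => /= _ hK _ hE1.
case: P2 => /= hlt _ hmax _.
rewrite -ei1 in hlt hmax.
split => //; first by rewrite /K leq_maxl.
  by rewrite hK hlt.
move=> k /andP[hk1 hk2].
have hkN : (Nf i < k)%N by apply: leq_trans hk1; rewrite /K !leq_max leqnn !orbT.
have hkM : (Mf i <= k)%N by apply: leq_trans hk1; rewrite /K !leq_max leqnn !orbT.
have kpos : 0 < k%:R :> R by rewrite ltr0n; apply: leq_ltn_trans hkN.
have := hNf i k (ltnW hkN); rewrite ler_norml => /andP[h3 h4].
have e : Dn k x = Dn k x / k%:R * k%:R by rewrite divfK // gt_eqF.
have hEk := hE1 k (introT andP (conj hkM hk2)).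
have hd : mdist (set_val (cocycle T w k x y)) (set_val (cocycle T w ni x y)) <= Dnk ni k x.
  rewrite /Dnk (@cocycle_split _ _ T w k ni x y hk2); exact: cocycle_nonexp.
have c1 := cle1 i; have c2 := cle2 i; have c0 := cpos i.
set t := ((2:R) ^+ i)^-1 in c2 *.
rewrite e; set q := Dn k x / k%:R in h3 h4 *.
move: hEk hd; set DD := Dn ni x; set DK := Dnk ni k x; set dd := mdist _ _ => hEk hd.
have -> : Num.min ((2:R) ^+ i)^-1 (alpha i) = c i by [].
set ci := c i in c1 c2 c0 h3 h4 hEk *.
have l1 : (A - A*ci/2)*k%:R <= q*k%:R by apply: ler_wpM2r; [exact: ltW | lra].
have l2 : q*k%:R <= (A + A*ci/2)*k%:R by apply: ler_wpM2r; [exact: ltW | lra].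
have hAk : 0 < A * k%:R by apply: mulr_gt0.
have l3 : A*k%:R*ci <= A*k%:R*t by apply: ler_wpM2l => //; exact: ltW.
have l4 : 0 <= A*k%:R*ci*ci by apply: mulr_ge0; [apply: mulr_ge0; apply: ltW|apply: ltW].
have l5 : (1-ci)*(q*k%:R) <= (1-ci)*((A + A*ci/2)*k%:R) by apply: ler_wpM2l => //; lra.
split.
  rewrite ler_norml; apply/andP; split; lra.
lra.
Qed.
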